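(* Let $\mathcal{X}$ be a finite set, $\pi$ a probability mass function on $\mathcal{X}$ with full support, and fix a group action of $\mathcal{G}$ on $\mathcal{X}$ with associated Gibbs, Metropolis–Hastings and Barker orbit kernels $G$, $M$, $B$. Let $\mathbf{G}=\{P\in\mathcal{S}(\pi):GPG=P\}$, $\mathbf{M}=\{P\in\mathcal{S}(\pi):MPM=P\}$, $\mathbf{B}=\{P\in\mathcal{S}(\pi):BPB=P\}$. If each orbit block of $G$, $M$ and $B$ is aperiodic, then $\mathbf{G}=\mathbf{M}=\mathbf{B}$.
   Context: $\mathcal{S}(\pi)$ is the set of transition matrices $P$ on $\mathcal{X}$ with $\pi P=\pi$. With $\mathcal{O}(x)$ the orbit of $x$: $G(x,y)=\pi(y)/\pi(\mathcal{O}(x))$ for $y\in\mathcal{O}(x)$, else $0$; $M(x,y)=\frac{1}{|\mathcal{O}(x)|-1}\min\{1,\pi(y)/\pi(x)\}$ for $y\in\mathcal{O}(x)\setminus\{x\}$, $0$ off the orbit, $M(x,x)=1-\sum_{y\ne x}M(x,y)$; $B$ is the same with acceptance $\pi(y)/(\pi(x)+\pi(y))$. These kernels are block diagonal with one block per orbit; aperiodicity of a block refers to the Markov chain on that orbit given by the block. *)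

(* Defs.v *)
From mathcomp Require Import all_boot all_order all_fingroup all_algebra.
Set Implicit Arguments. Unset Strict Implicit. Unset Printing Implicit Defensive.
Import Order.TTheory GRing.Theory Num.Theory.
Local Open Scope ring_scope.

Section Kernels.
Variables (R : realFieldType) (X : finType).

Definition kmul (P Q : X -> X -> R) : X -> X -> R :=
  fun x y => \sum_(z : X) P x z * Q z y.

Definition kid : X -> X -> R := fun x y => (x == y)%:R.

Fixpoint kpow (P : X -> X -> R) (n : nat) : X -> X -> R :=
  if n is m.+1 then kmul (kpow P m) P else kid.

Definition stochastic (P : X -> X -> R) : Prop :=
  (forall x y, 0 <= P x y) /\ (forall x, \sum_(y : X) P x y = 1).

Definition in_S (pi : X -> R) (P : X -> X -> R) : Prop :=
  stochastic P /\ (forall y, \sum_(x : X) pi x * P x y = pi y).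

Definition inv_set (pi : X -> R) (K P : X -> X -> R) : Prop :=
  in_S pi P /\ (forall x y, kmul (kmul K P) K x y = P x y).

(* period of x is 1: the gcd of {n > 0 : K^n(x,x) > 0} equals 1 *)
Definition aperiodic_at (K : X -> X -> R) (x : X) : Prop :=
  forall d : nat, (forall n : nat, (0 < n)%N -> 0 < kpow K n x x -> (d %| n)%N) ->
    d = 1%N.

Definition aperiodic_block (K : X -> X -> R) (O : {set X}) : Prop :=
  forall x, x \in O -> aperiodic_at K x.

End Kernels.

Section OrbitKernels.
Variables (R : realFieldType) (X : finType) (gT : finGroupType).
Variables (H : {group gT}) (to : {action gT &-> X}) (pi : X -> R).

Definition act_orbit (x : X) : {set X} := orbit to H x.

Definition act_orbit_mass (x : X) : R := \sum_(z in act_orbit x) pi z.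

Definition gibbs_kernel : X -> X -> R :=
  fun x y => if y \in act_orbit x then pi y / act_orbit_mass x else 0.

Definition mh_offdiag (x y : X) : R :=
  if (y \in act_orbit x) && (y != x) then
    (#|act_orbit x|%:R - 1)^-1 * Num.min 1 (pi y / pi x)
  else 0.

Definition mh_kernel : X -> X -> R :=
  fun x y => if y == x then 1 - \sum_(z | z != x) mh_offdiag x z
             else mh_offdiag x y.

Definition barker_offdiag (x y : X) : R :=
  if (y \in act_orbit x) && (y != x) then
    (#|act_orbit x|%:R - 1)^-1 * (pi y / (pi x + pi y))
  else 0.

Definition barker_kernel : X -> X -> R :=
  fun x y => if y == x then 1 - \sum_(z | z != x) barker_offdiag x z
             else barker_offdiag x y.

End OrbitKernels.

(* Main.v *)
Require Import Defs.
From mathcomp Require Import all_boot all_order all_fingroup all_algebra.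
From mathcomp Require Import ring lra.
From Stdlib Require Import FunctionalExtensionality.
Import Order.TTheory GRing.Theory Num.Theory.
Local Open Scope ring_scope.

Set Implicit Arguments. Unset Strict Implicit. Unset Printing Implicit Defensive.

Section Alg.
Variables (R : realFieldType) (X : finType).
Implicit Types (K P Q : X -> X -> R) (f : X -> R).

Lemma kmulA (A B C : X -> X -> R) : kmul (kmul A B) C = kmul A (kmul B C).
Proof.
apply: functional_extensionality => x; apply: functional_extensionality => y.
rewrite /kmul.
under eq_bigr do rewrite big_distrl /=.
rewrite exchange_big /=; apply: eq_bigr => z _.
by rewrite big_distrr /=; apply: eq_bigr => u _; rewrite mulrA.
Qed.

Lemma sumsum_mul (F G : X -> R) :
  \sum_i \sum_j F i * G j = (\sum_i F i) * (\sum_j G j).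
Proof. by rewrite big_distrlr. Qed.

Lemma var_id K x f : \sum_z K x z = 1 ->
  \sum_z \sum_w K x z * K x w * (f z - f w) ^+ 2 =
  2%:R * (\sum_z K x z * f z ^+ 2 - (\sum_z K x z * f z) ^+ 2).
Proof.
move=> h1.
have e : forall z w, K x z * K x w * (f z - f w) ^+ 2 =
   (K x z * f z ^+ 2) * K x w + K x z * (K x w * f w ^+ 2)
   - 2%:R * ((K x z * f z) * (K x w * f w)) by move=> z w; ring.
under eq_bigr do under eq_bigr do rewrite e.
under eq_bigr do rewrite sumrB big_split /=.
rewrite sumrB big_split /=.
rewrite (sumsum_mul (fun i => K x i * f i ^+ 2) (K x)).
rewrite (sumsum_mul (K x) (fun i => K x i * f i ^+ 2)).
under [X in _ - X]eq_bigr do rewrite -mulr_sumr.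
rewrite -mulr_sumr -big_distrlr /= h1.
rewrite expr2; ring.
Qed.

End Alg.

Section Gen.
Variables (R : realFieldType) (X : finType) (O : X -> {set X}) (pi : X -> R).
Hypothesis Orefl : forall x, x \in O x.
Hypothesis Oeq : forall x y, y \in O x -> O y = O x.
Hypothesis pi_gt0 : forall x, 0 < pi x.
Implicit Types (K P Q : X -> X -> R) (f : X -> R).

Lemma Osym x y : (y \in O x) = (x \in O y).
Proof.
apply/idP/idP => h; first by rewrite (Oeq h) Orefl.
by rewrite (Oeq h) Orefl.
Qed.

Definition mass x := \sum_(z in O x) pi z.
Definition Gk x y := if y \in O x then pi y / mass x else 0.

Lemma mass_gt0 x : 0 < mass x.
Proof.
rewrite /mass (bigD1 x) ?Orefl //=.
apply: ltr_wpDr; last exact: pi_gt0.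
by apply: sumr_ge0 => i _; exact: ltW.
Qed.

Lemma mass_eq x y : y \in O x -> mass y = mass x.
Proof. by move=> h; rewrite /mass (Oeq h). Qed.

Definition goodK K :=
  [/\ forall x y, 0 <= K x y, forall x, \sum_y K x y = 1,
      forall x y, pi x * K x y = pi y * K y x,
      forall x y, y \notin O x -> K x y = 0 &
      forall x y, y \in O x -> y != x -> 0 < K x y].

Lemma goodG : goodK Gk.
Proof.
split.
- move=> x y; rewrite /Gk; case: ifP => // _.
  by apply: divr_ge0; [exact: ltW | exact: ltW (mass_gt0 x)].
- move=> x; rewrite /Gk -big_mkcond /= -mulr_suml.
  by rewrite divff // gt_eqF // mass_gt0.
- move=> x y; rewrite /Gk -Osym; case: ifP => h //; last by rewrite !mulr0.
  by rewrite (mass_eq h); rewrite !mulrA [pi x * pi y]mulrC.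
- by move=> x y /negbTE h; rewrite /Gk h.
- move=> x y h _; rewrite /Gk h.
  by apply: divr_gt0 => //; exact: mass_gt0.
Qed.

Lemma stat K : goodK K -> forall y, \sum_x pi x * K x y = pi y.
Proof.
case=> _ h1 h2 _ _ y.
under eq_bigr do rewrite h2.
by rewrite -mulr_sumr h1 mulr1.
Qed.

Lemma KG K : goodK K -> forall x y, kmul K Gk x y = Gk x y.
Proof.
case=> _ h1 _ h3 _ x y; rewrite /kmul.
transitivity (\sum_z K x z * Gk x y); last by rewrite -mulr_suml h1 mul1r.
apply: eq_bigr => z _.
case: (boolP (z \in O x)) => hz; last by rewrite h3 // !mul0r.
by rewrite /Gk (Oeq hz) (mass_eq hz).
Qed.

Lemma GK K : goodK K -> forall x y, kmul Gk K x y = Gk x y.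
Proof.
case=> _ h1 h2 h3 _ x y; rewrite /kmul.
transitivity (\sum_z Gk x y * K y z); last by rewrite -mulr_sumr h1 mulr1.
apply: eq_bigr => z _; rewrite /Gk.
case: (boolP (z \in O x)) => hz; case: (boolP (y \in O x)) => hy.
- by rewrite mulrAC h2 mulrAC.
- by rewrite h3 ?mulr0 ?mul0r // (Oeq hz).
- by rewrite mul0r h3 ?mulr0 // (Oeq hy).
- by rewrite !mul0r.
Qed.

Lemma sum_delta (F : X -> R) a : \sum_v (v == a)%:R * F v = F a.
Proof.
rewrite (bigD1 a) //= eqxx mul1r big1 ?addr0 // => v /negbTE ->.
by rewrite mul0r.
Qed.

Lemma connectK K : goodK K -> (forall x, aperiodic_at K x) ->
  forall z w, w \in O z -> w != z -> exists x, 0 < K x z /\ 0 < K x w.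
Proof.
case=> h0 h1 h2 h3 h5 hap z w hw hwz.
have hzw : z \in O w by rewrite -Osym.
have hzw' : z != w by rewrite eq_sym.
case: (boolP (0 < K z z)) => hzz.
  by exists z; split => //; exact: h5.
case: (boolP (0 < K w w)) => hww.
  by exists w; split => //; exact: h5.
case: (boolP [exists u, [&& u \in O z, u != z & u != w]]).
  move=> /existsP [u /and3P [hu huz huw]]; exists u.
  have Ou : O u = O z := Oeq hu.
  split; apply: h5; rewrite ?Ou ?Orefl // eq_sym //.
move=> /existsPn hno.
have Kzz : K z z = 0 by move: hzz; rewrite lt_def h0 andbT negbK => /eqP.
have Kww : K w w = 0 by move: hww; rewrite lt_def h0 andbT negbK => /eqP.
have inO : forall u, u \in O z -> u = z \/ u = w.
  move=> u hu; move: (hno u); rewrite hu /= negb_and !negbK.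
  by case/orP => /eqP; auto.
have Kz0 : forall u, u != w -> K z u = 0.
  move=> u huw; case: (boolP (u \in O z)) => hu; last exact: h3.
  case: (inO u hu) => e; first by rewrite e.
  by rewrite e eqxx in huw.
have Kw0 : forall u, u != z -> K w u = 0.
  move=> u huz; case: (boolP (u \in O w)) => hu; last exact: h3.
  rewrite (Oeq hw) in hu.
  case: (inO u hu) => e; last by rewrite e.
  by rewrite e eqxx in huz.
have Kzw : K z w = 1.
  by rewrite -(h1 z) (bigD1 w) //= big1 ?addr0 // => u /Kz0.
have Kwz : K w z = 1.
  by rewrite -(h1 w) (bigD1 z) //= big1 ?addr0 // => u /Kw0.
have kp : forall n u, kpow K n z u = (if odd n then (u == w)%:R else (u == z)%:R).
  elim => [|n IH] u /=; first by rewrite /kid eq_sym.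
  rewrite /kmul; under eq_bigr do rewrite IH.
  case: (odd n) => /=; rewrite sum_delta.
    by case: (eqVneq u z) => [->|h]; [rewrite Kwz | rewrite Kw0].
  by case: (eqVneq u w) => [->|h]; [rewrite Kzw | rewrite Kz0].
suff : (2 = 1)%N by [].
apply: (hap z) => n _; rewrite kp dvdn2.
by case: (odd n) => //=; rewrite (negbTE hzw') ltxx.
Qed.

Definition Vf K f :=
  \sum_x pi x * \sum_z \sum_w K x z * K x w * (f z - f w) ^+ 2.

Lemma Vf_ge0 K f : goodK K -> 0 <= Vf K f.
Proof.
case=> h0 _ _ _ _; apply: sumr_ge0 => x _; apply: mulr_ge0; first exact: ltW.
apply: sumr_ge0 => z _; apply: sumr_ge0 => w _.
by apply: mulr_ge0; [exact: mulr_ge0 | exact: sqr_ge0].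
Qed.

Lemma col_id K f : goodK K ->
  2%:R * \sum_x pi x * (\sum_z K x z * f z) ^+ 2 + Vf K f =
  2%:R * \sum_z pi z * f z ^+ 2.
Proof.
move=> hK; have [_ h1 _ _ _] := hK.
rewrite /Vf.
have eV : \sum_x pi x * \sum_z \sum_w K x z * K x w * (f z - f w) ^+ 2 =
  \sum_x pi x * (2%:R * (\sum_z K x z * f z ^+ 2 - (\sum_z K x z * f z) ^+ 2)).
  by apply: eq_bigr => x _; rewrite (@var_id R X K x f (h1 x)).
rewrite eV.
have eA : \sum_x pi x * \sum_z K x z * f z ^+ 2 = \sum_z pi z * f z ^+ 2.
  under eq_bigr do rewrite mulr_sumr.
  rewrite exchange_big /=; apply: eq_bigr => z _.
  rewrite -(stat hK z) mulr_suml; apply: eq_bigr => x _; by rewrite mulrA.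
rewrite -eA !mulr_sumr -big_split /=; apply: eq_bigr => x _; ring.
Qed.

Lemma psum0 (F : X -> R) : (forall i, 0 <= F i) -> \sum_i F i = 0 ->
  forall i, F i = 0.
Proof. by move=> h hs i; apply: (psumr_eq0P (fun i _ => h i) hs). Qed.

Lemma V0 K f : goodK K -> (forall x, aperiodic_at K x) -> Vf K f = 0 ->
  forall z w, w \in O z -> f z = f w.
Proof.
move=> hK hap hV z w hw.
have [h0 _ _ _ _] := hK.
case: (eqVneq w z) => [->//|hwz].
have [x [hxz hxw]] := connectK hK hap hw hwz.
have tge : forall a b, 0 <= K x a * K x b * (f a - f b) ^+ 2.
  by move=> a b; apply: mulr_ge0; [exact: mulr_ge0 | exact: sqr_ge0].
have t1 := psum0 _ hV x.
have : pi x * \sum_z \sum_w K x z * K x w * (f z - f w) ^+ 2 = 0.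
  apply: t1 => y; apply: mulr_ge0; first exact: ltW.
  apply: sumr_ge0 => a _; apply: sumr_ge0 => b _.
  by apply: mulr_ge0; [exact: mulr_ge0 | exact: sqr_ge0].
move/eqP; rewrite mulf_eq0 gt_eqF //= => /eqP h.
have h' := psum0 _ h z.
have h'' : \sum_w K x z * K x w * (f z - f w) ^+ 2 = 0.
  by apply: h' => a; apply: sumr_ge0 => b _.
have := psum0 (tge z) h'' w.
by move/eqP; rewrite mulf_eq0 (mulf_eq0 (K x z)) (gt_eqF hxz) (gt_eqF hxw) /= sqrf_eq0 subr_eq0 => /eqP.
Qed.

Definition nrm (F : X -> X -> R) := \sum_y (pi y)^-1 * \sum_x pi x * F x y ^+ 2.

Lemma nrm_swap F : nrm F = \sum_x pi x * \sum_y (pi y)^-1 * F x y ^+ 2.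
Proof.
rewrite /nrm; under eq_bigr do rewrite mulr_sumr.
rewrite exchange_big /=; apply: eq_bigr => x _; rewrite mulr_sumr.
by apply: eq_bigr => y _; ring.
Qed.

Lemma main_dir K : goodK K -> (forall x, aperiodic_at K x) ->
  forall P, kmul (kmul K P) K = P -> kmul (kmul Gk P) Gk = P.
Proof.
move=> hK hap P hP.
have [h0 h1 h2 h3 h5] := hK.
set Q := kmul P K.
have hKQ : kmul K Q = P by rewrite /Q -kmulA.
have hKQ' x y : \sum_z K x z * Q z y = P x y by rewrite -hKQ.
pose V1 := \sum_y (pi y)^-1 * Vf K (fun u => Q u y).
pose V2 := \sum_x pi x * Vf K (fun z => P x z / pi z).
have e1 : 2%:R * nrm P + V1 = 2%:R * nrm Q.
  rewrite /nrm /V1 !mulr_sumr -big_split /=; apply: eq_bigr => y _.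
  have cy := col_id (fun u => Q u y) hK; simpl in cy.
  have ex : \sum_x pi x * (\sum_z K x z * Q z y) ^+ 2 = \sum_x pi x * P x y ^+ 2.
    by apply: eq_bigr => x _; rewrite hKQ'.
  rewrite ex in cy.
  rewrite [RHS]mulrCA -cy; ring.
have e2 : 2%:R * nrm Q + V2 = 2%:R * nrm P.
  rewrite !nrm_swap /V2 !mulr_sumr -big_split /=; apply: eq_bigr => x _.
  pose g := fun z => P x z / pi z.
  have cx := col_id g hK.
  have eQ : forall y, Q x y = pi y * \sum_z K y z * g z.
    move=> y; rewrite /Q /kmul mulr_sumr; apply: eq_bigr => z _.
    rewrite /g mulrA (h2 y z); field; by rewrite gt_eqF.
  have ex1 : \sum_y (pi y)^-1 * Q x y ^+ 2 = \sum_y pi y * (\sum_z K y z * g z) ^+ 2.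
    apply: eq_bigr => y _; rewrite eQ; field; by rewrite gt_eqF.
  have ex2 : \sum_z (pi z)^-1 * P x z ^+ 2 = \sum_z pi z * g z ^+ 2.
    apply: eq_bigr => z _; rewrite /g; field; by rewrite gt_eqF.
  rewrite ex1 ex2 [RHS]mulrCA -cx; ring.
have V1ge : 0 <= V1.
  apply: sumr_ge0 => y _; apply: mulr_ge0; last exact: Vf_ge0.
  by rewrite invr_ge0 ltW.
have V2ge : 0 <= V2.
  apply: sumr_ge0 => x _; apply: mulr_ge0; last exact: Vf_ge0.
  exact: ltW.
have V10 : V1 = 0 by lra.
have V20 : V2 = 0 by lra.
have ha : forall y z w, w \in O z -> Q z y = Q w y.
  move=> y; apply: (V0 (f := fun u => Q u y)) hK hap _.
  have nn : forall b, 0 <= (pi b)^-1 * Vf K (fun u => Q u b).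
    by move=> b; apply: mulr_ge0; [rewrite invr_ge0 ltW | exact: Vf_ge0].
  have := psum0 nn V10 y.
  by move=> /eqP; rewrite mulf_eq0 invr_eq0 gt_eqF //= => /eqP.
have hb : forall x z w, w \in O z -> P x z / pi z = P x w / pi w.
  move=> x; apply: (V0 (f := fun z => P x z / pi z)) hK hap _.
  have nn : forall b, 0 <= pi b * Vf K (fun z => P b z / pi z).
    by move=> b; apply: mulr_ge0; [exact: ltW | exact: Vf_ge0].
  have := psum0 nn V20 x.
  by move=> /eqP; rewrite mulf_eq0 gt_eqF //= => /eqP.
have [_ hG1 _ _ _] := goodG.
have GQf : kmul Gk Q = Q.
  apply: functional_extensionality => x; apply: functional_extensionality => y.
  rewrite /kmul; transitivity (\sum_u Gk x u * Q x y); last first.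
    by rewrite -mulr_suml hG1 mul1r.
  apply: eq_bigr => u _; rewrite /Gk; case: ifP => hu; last by rewrite !mul0r.
  by rewrite (ha y x u hu).
have PGf : kmul P Gk = P.
  apply: functional_extensionality => x; apply: functional_extensionality => y.
  rewrite /kmul; transitivity (\sum_u Gk y u * P x y); last first.
    by rewrite -mulr_suml hG1 mul1r.
  apply: eq_bigr => u _; rewrite /Gk Osym; case: ifP => hu; last by rewrite mulr0 mul0r.
  rewrite (mass_eq hu).
  have e' : P x u = pi u * (P x y / pi y).
    by rewrite (hb x y u hu) mulrC divfK // gt_eqF.
  by rewrite e'; field; rewrite !gt_eqF ?mass_gt0.
have KGf : kmul K Gk = Gk.
  by apply: functional_extensionality => x; apply: functional_extensionality => y; exact: KG.
have PQ : P = Q.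
  by rewrite -[LHS]hKQ -GQf -kmulA KGf.
have GP : kmul Gk P = P by rewrite {1}PQ GQf -PQ.
by rewrite GP PGf.
Qed.

Lemma conv_dir K : goodK K -> forall P, kmul (kmul Gk P) Gk = P -> kmul (kmul K P) K = P.
Proof.
move=> hK P hG.
have KGf : kmul K Gk = Gk.
  by apply: functional_extensionality => x; apply: functional_extensionality => y; exact: KG.
have GKf : kmul Gk K = Gk.
  by apply: functional_extensionality => x; apply: functional_extensionality => y; exact: GK.
rewrite -{1}hG -(kmulA K (kmul Gk P) Gk) -(kmulA K Gk P) KGf.
by rewrite (kmulA (kmul Gk P) Gk K) GKf.
Qed.

End Gen.

Section OK.
Variables (R : realFieldType) (X : finType) (O : X -> {set X}) (pi : X -> R).
Hypothesis Orefl : forall x, x \in O x.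
Hypothesis Oeq : forall x y, y \in O x -> O y = O x.
Variable a : X -> X -> R.
Hypothesis ha0 : forall x y, 0 < a x y.
Hypothesis ha1 : forall x y, a x y <= 1.
Hypothesis hasym : forall x y, pi x * a x y = pi y * a y x.

Definition ooff x y :=
  if (y \in O x) && (y != x) then (#|O x|%:R - 1)^-1 * a x y else 0.
Definition okern x y :=
  if y == x then 1 - \sum_(z | z != x) ooff x z else ooff x y.

Lemma ooff_ge0 x y : 0 <= ooff x y.
Proof.
rewrite /ooff; case: ifP => // /andP [hy hyx].
apply: mulr_ge0; last exact: ltW.
rewrite invr_ge0 subr_ge0.
have : (1 < #|O x|)%N by apply/card_gt1P; exists x, y; rewrite Orefl hy eq_sym.
by rewrite -(ltr1n R) => /ltW.
Qed.

Lemma cO x : (#|O x|%:R - 1 : R)^-1 = (#|O x :\ x|%:R)^-1.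
Proof. by rewrite (cardsD1 x (O x)) Orefl add1n mulrSr addrK. Qed.

Lemma ooff_sum x : \sum_(z | z != x) ooff x z <= 1.
Proof.
pose c := (#|O x :\ x|%:R : R)^-1.
have c0 : 0 <= c by rewrite invr_ge0 ler0n.
apply: (@le_trans _ _ (\sum_(z in O x :\ x) c)).
  rewrite big_mkcond [X in _ <= X]big_mkcond /=; apply: ler_sum => z _.
  rewrite in_setD1 /ooff cO.
  case: (z != x); case: (z \in O x) => //=; rewrite ?lexx //.
  rewrite -[X in _ <= X]mulr1; apply: ler_wpM2l => //; exact: ha1.
rewrite sumr_const (_ : c *+ _ = c * #|O x :\ x|%:R); last by rewrite mulr_natr.
rewrite /c.
case: (eqVneq #|O x :\ x| 0%N) => [->|h]; first by rewrite (_ : 0%:R = 0 :> R) // mulr0 ler01.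
by rewrite mulVf // pnatr_eq0.
Qed.

Lemma good_okern (hpi : forall x, 0 < pi x) : goodK O pi okern.
Proof.
split.
- move=> x y; rewrite /okern; case: ifP => _; last exact: ooff_ge0.
  by rewrite subr_ge0 ooff_sum.
- move=> x; rewrite (bigD1 x) //= {1}/okern eqxx.
  rewrite [X in _ + X](eq_bigr (fun y => ooff x y)); first by rewrite subrK.
  by move=> y; rewrite /okern => /negbTE ->.
- move=> x y; case: (eqVneq y x) => [->//|hyx].
  rewrite /okern (negbTE hyx) eq_sym (negbTE hyx) /ooff -(Osym Orefl Oeq) eq_sym.
  case: (boolP (x \in O y)) => hy /=; last by rewrite !mulr0.
  by rewrite (eq_sym x y) hyx /= (Oeq hy) mulrCA hasym mulrCA.
- move=> x y hy; have hyx : y != x.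
    by apply: contraNneq hy => ->; exact: Orefl.
  by rewrite /okern (negbTE hyx) /ooff (negbTE hy).
- move=> x y hy hyx; rewrite /okern (negbTE hyx) /ooff hy hyx /=.
  apply: mulr_gt0; last exact: ha0.
  rewrite invr_gt0 subr_gt0.
  have : (1 < #|O x|)%N by apply/card_gt1P; exists x, y; rewrite Orefl hy eq_sym.
  by rewrite -(ltr1n R).
Qed.

End OK.
Section S.
Variables (R : realFieldType) (X : finType) (pi : X -> R).
Hypothesis hpi : forall x, 0 < pi x.
Lemma m1 x y : 0 < Num.min 1 (pi y / pi x).
Proof. rewrite lt_min ltr01 /=; exact: divr_gt0. Qed.
Lemma m2 x y : Num.min 1 (pi y / pi x) <= 1.
Proof. by rewrite ge_min lexx. Qed.
Lemma m3 x y : pi x * Num.min 1 (pi y / pi x) = pi y * Num.min 1 (pi x / pi y).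
Proof.
rewrite !minr_pMr ?ltW // !mulr1.
rewrite mulrCA divff ?gt_eqF // mulr1.
by rewrite mulrCA divff ?gt_eqF // mulr1 minC.
Qed.
Lemma b1 x y : 0 < pi y / (pi x + pi y).
Proof. by apply: divr_gt0 => //; exact: addr_gt0. Qed.
Lemma b2 x y : pi y / (pi x + pi y) <= 1.
Proof. by rewrite ler_pdivrMr ?addr_gt0 // mul1r -subr_ge0 addrK ltW. Qed.
Lemma b3 x y : pi x * (pi y / (pi x + pi y)) = pi y * (pi x / (pi y + pi x)).
Proof. by rewrite [pi y + pi x]addrC !mulrA [pi x * pi y]mulrC. Qed.
End S.

Lemma inv_iff (R : realFieldType) (X : finType) (O : X -> {set X}) (pi : X -> R)
  (Orefl : forall x, x \in O x) (Oeq : forall x y, y \in O x -> O y = O x)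
  (hpi : forall x, 0 < pi x) K :
  goodK O pi K -> (forall x, aperiodic_at K x) ->
  forall P, inv_set pi K P <-> inv_set pi (Gk O pi) P.
Proof.
move=> hK hap P; split=> -[hS hE]; split => // x y.
- have hE' : kmul (kmul K P) K = P.
    by apply: functional_extensionality => u; apply: functional_extensionality => v.
  by rewrite (main_dir Orefl Oeq hpi hK hap hE').
- have hE' : kmul (kmul (Gk O pi) P) (Gk O pi) = P.
    by apply: functional_extensionality => u; apply: functional_extensionality => v.
  by rewrite (conv_dir Oeq hK hE').
Qed.

Unset Implicit Arguments.

Theorem proposition5p1 (R : realFieldType) (X : finType) (gT : finGroupType)
  (H : {group gT}) (to : {action gT &-> X}) (pi : X -> R) :
  (forall x, 0 < pi x) -> \sum_(x : X) pi x = 1 ->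
  (forall x, aperiodic_block (gibbs_kernel H to pi) (act_orbit H to x)) ->
  (forall x, aperiodic_block (mh_kernel H to pi) (act_orbit H to x)) ->
  (forall x, aperiodic_block (barker_kernel H to pi) (act_orbit H to x)) ->
  forall P : X -> X -> R,
    (inv_set pi (gibbs_kernel H to pi) P <-> inv_set pi (mh_kernel H to pi) P) /\
    (inv_set pi (mh_kernel H to pi) P <-> inv_set pi (barker_kernel H to pi) P).
Proof.
move=> hpi _ apG apM apB P.
pose O := act_orbit H to.
have Orefl : forall x, x \in O x by move=> x; exact: orbit_refl.
have Oeq : forall x y, y \in O x -> O y = O x by move=> x y /orbit_eqP.
have ap : forall K : X -> X -> R, (forall x, aperiodic_block K (act_orbit H to x)) ->
    forall x, aperiodic_at K x.
  by move=> K hK x; exact: (hK x x (Orefl x)).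
have eG : gibbs_kernel H to pi = Gk O pi.
  by rewrite /gibbs_kernel /Gk /act_orbit_mass /mass.
have eM : mh_kernel H to pi = okern O (fun x y => Num.min 1 (pi y / pi x)).
  by rewrite /mh_kernel /okern /mh_offdiag /ooff.
have eB : barker_kernel H to pi = okern O (fun x y => pi y / (pi x + pi y)).
  by rewrite /barker_kernel /okern /barker_offdiag /ooff.
rewrite eG eM eB in apG apM apB *.
have gM : goodK O pi (okern O (fun x y => Num.min 1 (pi y / pi x))).
  apply: (@good_okern R X O pi Orefl Oeq (fun x y => Num.min 1 (pi y / pi x))) => // x y.
  - exact: m1.
  - exact: m2.
  - exact: m3.
have gB : goodK O pi (okern O (fun x y => pi y / (pi x + pi y))).
  apply: (@good_okern R X O pi Orefl Oeq (fun x y => pi y / (pi x + pi y))) => // x y.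
  - exact: b1.
  - exact: b2.
  - exact: b3.
have iM := @inv_iff R X O pi Orefl Oeq hpi _ gM (ap _ apM) P.
have iB := @inv_iff R X O pi Orefl Oeq hpi _ gB (ap _ apB) P.
split; [exact: (iff_sym iM) | exact: (iff_trans iM (iff_sym iB))].
Qed.
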